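(* Let $n\ge3$ and $\lambda\ge1$ be integers and let $X=\langle a,z\rangle$ be as below. Then $\mathrm{RotaMap}(X,a,z)$ is an $X$-rotary embedding of $\mathbf Q_n^{(\lambda)}$ with valency $n$, edge-multiplicity $\lambda$ and face-length $2n\lambda/\gcd(2,\lambda)$, and its face boundary cycles are regular cycles whose edge-induced subgraphs are $\mathbf C_{2n}^{(\lambda/\gcd(2,\lambda))}$.
   Context: $X=N\rtimes\langle a\rangle$ where $N=\langle v_0,\dots,v_{n-1}\rangle\cong\mathbb Z_2^n$ is elementary abelian with basis $v_i$, $|a|=n\lambda$, $v_i^a=v_{i+1}$ (indices mod $n$), and $z=v_0$; $(a,z)$ is a rotary pair for $X$ (i.e. $X=\langle a,z\rangle$, $|a|$ finite, $|z|=2$, $z\notin\langle a\rangle$). $\mathrm{RotaMap}(X,a,z)$: vertices the right cosets of $\langle a\rangle$, edges the right cosets of $\langle z\rangle$, faces the right cosets of $\langle az\rangle$, incidence by non-empty intersection, the face $\langle az\rangle g$ having boundary cycle $(\langle z\rangle(az)^i)_{0\le i<|az|}\,g$, surface obtained by gluing discs along these cycles. $X$-rotary: $X$ arc-transitive and vertex and face stabilisers induce cyclic groups on the incident edges. $\mathbf Q_n^{(\lambda)}$: $n$-cube with every edge replaced by $\lambda$ parallel edges; $\mathbf C_r^{(\mu)}$: simple $r$-cycle with every edge replaced by $\mu$ parallel edges. A cycle is regular if its vertex sequence is periodic with period equal to the number of distinct vertices. *)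

(* Defs.v *)
From HB Require Import structures.
From mathcomp Require Import all_boot all_fingroup all_solvable.

Set Implicit Arguments.
Unset Strict Implicit.
Unset Printing Implicit Defensive.

Local Open Scope group_scope.

Definition mg_iso (V1 E1 V2 E2 : finType)
  (VS1 : {set V1}) (ES1 : {set E1}) (inc1 : V1 -> E1 -> bool)
  (VS2 : {set V2}) (ES2 : {set E2}) (inc2 : V2 -> E2 -> bool) : Prop :=
  exists (f : V1 -> V2) (g : E1 -> E2),
    [/\ {in VS1 &, injective f}, f @: VS1 = VS2,
        {in ES1 &, injective g}, g @: ES1 = ES2 &
        {in VS1 & ES1, forall v e, inc2 (f v) (g e) = inc1 v e}].

(* Q_n^(lam): vertices are 0/1-vectors of length n; the edge (u, i, j) with
   u i = false joins u and u + e_i; j < lam indexes the lam parallel copies. *)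
Definition cube_flip n (u : {ffun 'I_n -> bool}) (i : 'I_n) : {ffun 'I_n -> bool} :=
  [ffun k => if k == i then ~~ u k else u k].

Definition cubeQ_edges n lam : {set ({ffun 'I_n -> bool} * 'I_n * 'I_lam)} :=
  [set e : {ffun 'I_n -> bool} * 'I_n * 'I_lam | ~~ e.1.1 e.1.2].

Definition cubeQ_inc n lam (v : {ffun 'I_n -> bool})
  (e : {ffun 'I_n -> bool} * 'I_n * 'I_lam) : bool :=
  (v == e.1.1) || (v == cube_flip e.1.1 e.1.2).

(* C_r^(mu): vertices 'I_r, the edge (i, j) joins i and i+1 mod r,
   j < mu indexes the mu parallel copies. *)
Definition cycleC_inc r mu (v : 'I_r) (e : 'I_r * 'I_mu) : bool :=
  (val v == val e.1) || (val v == (val e.1).+1 %% r).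

Section RotaMap.
Variable gT : finGroupType.
Implicit Types (X : {set gT}) (a z g : gT).

Definition rm_vertices X a := rcosets <[a]> X.
Definition rm_edges X z := rcosets <[z]> X.
Definition rm_faces X a z := rcosets <[a * z]> X.

Definition rm_inc (A B : {set gT}) : bool := A :&: B != set0.

Definition face_edge_seq a z g : seq {set gT} :=
  [seq <[z]> :* ((a * z) ^+ i * g) | i <- iota 0 #[a * z]].
Definition face_vertex_seq a z g : seq {set gT} :=
  [seq <[a]> :* ((a * z) ^+ i * g) | i <- iota 0 #[a * z]].

Definition rm_arcs X a z : {set {set gT} * {set gT}} :=
  [set p | [&& p.1 \in rm_vertices X a, p.2 \in rm_edges X z & rm_inc p.1 p.2]].

Definition rm_arc_transitive X a z : Prop :=
  {in rm_arcs X a z &, forall p q,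
     exists2 x, x \in X & q = (p.1 :* x, p.2 :* x)}.

Definition induces_cyclic_on_edges X z (C : {set gT}) : Prop :=
  let St := [set x in X | C :* x == C] in
  let I := [set E in rm_edges X z | rm_inc C E] in
  exists2 y, y \in St &
    forall x, x \in St -> exists k, {in I, forall E, E :* x = E :* (y ^+ k)}.

Definition rm_X_rotary X a z : Prop :=
  [/\ rm_arc_transitive X a z,
      {in rm_vertices X a, forall V, induces_cyclic_on_edges X z V} &
      {in rm_faces X a z, forall F, induces_cyclic_on_edges X z F}].

Definition rm_neighbours X a z (V : {set gT}) : {set {set gT}} :=
  [set W in rm_vertices X a | (W != V) &&
     [exists E in rm_edges X z, rm_inc V E && rm_inc W E]].

Definition rm_mult X z (V W : {set gT}) : nat :=
  #|[set E in rm_edges X z | rm_inc V E && rm_inc W E]|.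

End RotaMap.

Definition regular_seq (T : eqType) (s : seq T) : bool :=
  let d := size (undup s) in s == flatten (nseq (size s %/ d) (take d s)).

(* Main.v *)
Require Import Defs.
From HB Require Import structures.
From mathcomp Require Import all_boot all_fingroup all_solvable.

Set Implicit Arguments.
Unset Strict Implicit.
Unset Printing Implicit Defensive.
Local Open Scope group_scope.

Section InvPick.
Variables (V1 V2 : finType) (S2 : {set V2}) (F : V2 -> V1) (d : V2).
Definition finv (x : V1) : V2 := if [pick y in S2 | F y == x] is Some y then y else d.
Hypothesis Finj : {in S2 &, injective F}.
Lemma finv_spec x : x \in F @: S2 -> finv x \in S2 /\ F (finv x) = x.
Proof.
case/imsetP=> y yS ->; rewrite /finv; case: pickP => [y' /andP[y'S /eqP]//|/(_ y)].
by rewrite yS eqxx.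
Qed.
Lemma finvK y : y \in S2 -> finv (F y) = y.
Proof.
move=> yS; have [h1 h2] := finv_spec (imset_f F yS); exact: Finj.
Qed.
End InvPick.

Lemma mg_iso_inv (V1 E1 V2 E2 : finType) (VS1 : {set V1}) (ES1 : {set E1}) inc1
  (VS2 : {set V2}) (ES2 : {set E2}) inc2 (F : V2 -> V1) (G : E2 -> E1) (v0 : V2) (e0 : E2) :
  {in VS2 &, injective F} -> F @: VS2 = VS1 -> {in ES2 &, injective G} -> G @: ES2 = ES1 ->
  {in VS2 & ES2, forall x e, inc1 (F x) (G e) = inc2 x e} ->
  mg_iso VS1 ES1 inc1 VS2 ES2 inc2.
Proof.
move=> Fi FS Gi GS Hinc.
exists (finv VS2 F v0), (finv ES2 G e0); split.
- move=> x y; rewrite -FS => xS yS E.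
  by have [_ <-] := finv_spec v0 xS; have [_ <-] := finv_spec v0 yS; rewrite E.
- apply/eqP; rewrite eqEsubset; apply/andP; split; apply/subsetP => y.
    by case/imsetP=> x; rewrite -FS => /(finv_spec v0)[h _] ->.
  by move=> yS; apply/imsetP; exists (F y); [rewrite -FS imset_f | rewrite finvK].
- move=> x y; rewrite -GS => xS yS E.
  by have [_ <-] := finv_spec e0 xS; have [_ <-] := finv_spec e0 yS; rewrite E.
- apply/eqP; rewrite eqEsubset; apply/andP; split; apply/subsetP => y.
    by case/imsetP=> x; rewrite -GS => /(finv_spec e0)[h _] ->.
  by move=> yS; apply/imsetP; exists (G y); [rewrite -GS imset_f | rewrite finvK].
- move=> x e; rewrite -FS -GS => xS eS.
  have [h1 h2] := finv_spec v0 xS; have [h3 h4] := finv_spec e0 eS.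
  by rewrite -Hinc // h2 h4.
Qed.

Lemma mem_flatten_nseq (T : eqType) (L : seq T) t x : (0 < t)%N ->
  (x \in flatten (nseq t L)) = (x \in L).
Proof.
elim: t => [//|[|t] IH] _ /=; first by rewrite cats0.
by rewrite mem_cat IH // orbb.
Qed.

Lemma map_iota_periodic (T : Type) (f : nat -> T) p t : (forall i, f (i + p) = f i) ->
  map f (iota 0 (p * t)) = flatten (nseq t (map f (iota 0 p))).
Proof.
move=> Hp; elim: t => [|t IH]; first by rewrite muln0.
rewrite mulnS iotaD /= map_cat -IH; congr (_ ++ _).
rewrite add0n -(addn0 p) iotaDl -map_comp addn0; apply: eq_map => i /=.
by rewrite addnC Hp.
Qed.

Lemma regular_periodic (T : eqType) (f : nat -> T) p t : (0 < p)%N -> (0 < t)%N ->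
  (forall i, f (i + p) = f i) -> uniq (map f (iota 0 p)) ->
  regular_seq (map f (iota 0 (p * t))).
Proof.
move=> p0 t0 Hp U; rewrite /regular_seq map_iota_periodic //.
set L := map f (iota 0 p).
have sL : size L = p by rewrite size_map size_iota.
have du : size (undup (flatten (nseq t L))) = p.
  rewrite -sL; apply: perm_size; apply: uniq_perm; rewrite ?undup_uniq //.
  by move=> x; rewrite mem_undup mem_flatten_nseq.
have sz : size (flatten (nseq t L)) = (p * t)%N.
  by rewrite -map_iota_periodic // size_map size_iota.
rewrite du sz mulKn //.
case: t t0 {sz du} => [//|t] _ /=.
by rewrite take_size_cat.
Qed.

Section Main.
Variables (gT : finGroupType) (n lam : nat) (X N : {group gT}) (a z : gT).
Hypotheses (hn : (3 <= n)%N) (hl : (1 <= lam)%N) (hsd : N ><| <[a]> = X)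
  (hab : 2.-abelem N) (hgen : N :=: <<[set z ^ (a ^+ i) | i : 'I_n]>>)
  (hcard : #|N| = (2 ^ n)%N) (ho : #[a] = (n * lam)%N) (hzn : z ^ (a ^+ n) = z).

Local Notation K := <[a]>.
Definition v (k : nat) := z ^ (a ^+ k).

Lemma n_gt0 : (0 < n)%N. Proof. by apply: leq_trans hn. Qed.

Lemma ctx : [/\ N <| X, K \subset X, N * K = X, K \subset 'N(N) & N :&: K = 1].
Proof. exact: sdprod_context. Qed.

Lemma aX : a \in X.
Proof. by case: ctx => _ /subsetP sKX _ _ _; apply: sKX; apply: cycle_id. Qed.

Lemma NX : N \subset X.
Proof. by case: ctx => /andP[]. Qed.

Lemma nNX : X \subset 'N(N).
Proof. by case: ctx => /andP[]. Qed.

Lemma aN : a \in 'N(N).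
Proof. by apply: (subsetP nNX); apply: aX. Qed.

Lemma akN k : a ^+ k \in 'N(N).
Proof. by apply: groupX; apply: aN. Qed.

Lemma abN : abelian N.
Proof. by case/(abelemP (isT : prime 2)): hab. Qed.

Lemma sqN x : x \in N -> x * x = 1.
Proof. by case/(abelemP (isT : prime 2)): hab => _ H /H; rewrite expgS expg1. Qed.

Lemma commN x y : x \in N -> y \in N -> x * y = y * x.
Proof. by move=> xN yN; apply: (centsP abN). Qed.

Lemma zN : z \in N.
Proof.
rewrite hgen; apply: mem_gen; apply/imsetP.
by exists (Ordinal n_gt0) => //=; rewrite expg0 conjg1.
Qed.

Lemma vN k : v k \in N.
Proof. by rewrite /v memJ_norm ?zN ?akN. Qed.

Lemma v_nq q : z ^ (a ^+ (n * q)) = z.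
Proof.
elim: q => [|q IH]; first by rewrite muln0 expg0 conjg1.
by rewrite mulnS expgD conjgM hzn IH.
Qed.

Lemma vmod k : v k = v (k %% n).
Proof.
rewrite /v. rewrite {1}(divn_eq k n). rewrite mulnC expgD conjgM v_nq. done.
Qed.

Lemma vsq k : v k * v k = 1.
Proof. exact: sqN (vN k). Qed.

Lemma zak k : z * a ^+ k = a ^+ k * v k.
Proof. exact: conjgC. Qed.

Lemma KN1 x : x \in K -> x \in N -> x = 1.
Proof.
move=> xK xN; case: ctx => _ _ _ _ E.
have : x \in N :&: K by rewrite inE xN xK.
by rewrite E => /set1gP.
Qed.

Lemma DU k k' w w' : w \in N -> w' \in N -> a ^+ k * w = a ^+ k' * w' ->
  a ^+ k = a ^+ k' /\ w = w'.
Proof.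
move=> wN w'N E.
have E2 : (a ^+ k')^-1 * a ^+ k = w' * w^-1.
  by apply: (canRL (mulgK w)); rewrite -mulgA E mulKg.
have h1 : w' * w^-1 = 1.
  by apply: KN1; [rewrite -E2; rewrite groupM ?groupV ?mem_cycle | rewrite groupM ?groupV].
split; last by apply/esym/eqP; rewrite eq_mulgV1 h1.
by apply: (mulgI ((a ^+ k')^-1)); rewrite E2 h1 mulVg.
Qed.

Lemma decomp g : g \in X -> exists k w, [/\ (k < n * lam)%N, w \in N & g = a ^+ k * w].
Proof.
move=> gX; case: ctx => _ _ eNK nKN _.
have : g \in K * N by rewrite (normC nKN) eNK.
case/mulsgP=> y w yK wN ->; case/cycleP: yK => i ->.
exists (i %% #[a])%N, w; split => //; last by rewrite expg_mod_order.
by rewrite -ho ltn_pmod // order_gt0.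
Qed.

Lemma zcyc x : x \in <[z]> -> x = 1 \/ x = z.
Proof.
case/cycleP=> i ->; elim: i => [|i IH]; first by left.
rewrite expgS; case: IH => ->.
- by right; rewrite mulg1.
- by left; rewrite (sqN zN).
Qed.

Lemma zcoset x h : (x \in <[z]> :* h) = (x == h) || (x == z * h).
Proof.
rewrite mem_rcoset; apply/idP/orP.
- by case/zcyc => E; [left | right]; rewrite -(mulgKV h x) E ?mul1g.
- case=> /eqP ->; first by rewrite mulgV group1.
  by rewrite mulgK cycle_id.
Qed.

Lemma Kcoset x w : w \in N -> (x \in K :* w) = [exists i : 'I_#[a], x == a ^+ i * w].
Proof.
move=> wN; rewrite mem_rcoset; apply/idP/existsP.
- case/cycleP=> i E; exists (Ordinal (ltn_pmod i (order_gt0 a))).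
  by rewrite /= expg_mod_order -E mulgKV.
- by case=> i /eqP ->; rewrite mulgK mem_cycle.
Qed.

Lemma Krep w w' : w \in N -> w' \in N -> K :* w = K :* w' -> w = w'.
Proof.
move=> wN w'N E.
have : w \in K :* w' by rewrite -E; apply: rcoset_refl.
rewrite Kcoset // => /existsP[i /eqP Ei].
by case: (DU wN w'N (_ : a ^+ 0 * w = a ^+ i * w')) => //; rewrite mul1g.
Qed.

Lemma KcosetK k w : K :* (a ^+ k * w) = K :* w.
Proof. by rewrite rcosetM rcoset_id // mem_cycle. Qed.

Lemma zcosetz h : <[z]> :* (z * h) = <[z]> :* h.
Proof. by rewrite rcosetM rcoset_id // cycle_id. Qed.

Lemma INC w0 k w : w0 \in N -> w \in N ->
  rm_inc (K :* w0) (<[z]> :* (a ^+ k * w)) = (w0 == w) || (w0 == v k * w).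
Proof.
move=> w0N wN; rewrite /rm_inc; apply/set0Pn/orP.
- case=> x; rewrite inE zcoset Kcoset // => /andP[/existsP[i /eqP ->]].
  rewrite mulgA zak -mulgA => /orP[]/eqP/DU.
  + by case=> //  _ ->; left.
  + by case=> // ; [rewrite groupM ?vN | move=> _ ->; right].
- case=> /eqP ->.
  + exists (a ^+ k * w); rewrite inE zcoset eqxx /= andbT.
    by rewrite mem_rcoset mulgK mem_cycle.
  + exists (z * (a ^+ k * w)); rewrite inE zcoset eqxx orbT andbT.
    by rewrite mulgA zak -mulgA mem_rcoset mulgK mem_cycle.
Qed.

Fixpoint phis (u : {ffun 'I_n -> bool}) (s : seq 'I_n) : gT :=
  if s is j :: s' then (if u j then v j * phis u s' else phis u s') else 1.
Definition phi u := phis u (enum 'I_n).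

Lemma phis_in u s : phis u s \in N.
Proof.
elim: s => [|j s IH] /=; first exact: group1.
by case: (u j) => //; rewrite groupM ?vN.
Qed.

Lemma phis_notin u i s : i \notin s -> phis (cube_flip u i) s = phis u s.
Proof.
elim: s => [|j s IH] //=; rewrite inE negb_or => /andP[ij /IH ->].
by rewrite /cube_flip ffunE eq_sym (negbTE ij).
Qed.

Lemma phis_flip u i s : uniq s -> i \in s -> phis (cube_flip u i) s = v i * phis u s.
Proof.
elim: s => [|j s IH] //= /andP[js us]; rewrite inE; case: (eqVneq i j) => [E _|ij /= iS].
  subst j.
  rewrite phis_notin // /cube_flip ffunE eqxx; case: (u i) => /=; last by [].
  by rewrite mulgA vsq mul1g.
rewrite /cube_flip ffunE eq_sym (negbTE ij) IH //.
case: (u j) => //; rewrite [LHS]mulgA [RHS]mulgA (commN (vN j) (vN i)) //.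
Qed.

Lemma phi_in u : phi u \in N.
Proof. exact: phis_in. Qed.

Lemma phi_flip u i : phi (cube_flip u i) = v i * phi u.
Proof. by rewrite /phi phis_flip ?enum_uniq ?mem_enum. Qed.

Lemma phi0 : phi [ffun => false] = 1.
Proof. by rewrite /phi; elim: (enum 'I_n) => //= j s ->; rewrite ffunE. Qed.

Lemma phi_surj x : x \in N -> exists u, phi u = x.
Proof.
rewrite hgen => /gen_prodgP[m [c cA ->]]; elim: m c cA => [|m IH] c cA.
  by exists [ffun => false]; rewrite big_ord0 phi0.
rewrite big_ord_recl; case: (IH (fun i => c (lift ord0 i))) => [i|u Eu]; first exact: cA.
have := cA ord0; case/imsetP=> j _ ->.
by exists (cube_flip u j); rewrite phi_flip Eu.
Qed.

Lemma phi_img : phi @: setT = N.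
Proof.
apply/eqP; rewrite eqEsubset; apply/andP; split.
  by apply/subsetP=> x /imsetP[u _ ->]; apply: phi_in.
apply/subsetP=> x /phi_surj[u <-]; exact: imset_f.
Qed.

Lemma phi_inj : injective phi.
Proof.
have : {in setT &, injective phi}.
  apply/imset_injP; rewrite phi_img hcard cardsT card_ffun card_bool card_ord //.
by move=> H u u' E; apply: H; rewrite ?inE.
Qed.

Lemma v_inj (i j : 'I_n) w : w \in N -> v i * w = v j * w -> i = j.
Proof.
case/phi_surj=> u <-; rewrite -!phi_flip => /phi_inj/ffunP/(_ i); rewrite /cube_flip.
rewrite !ffunE eqxx; case: ifP => [/eqP //|_].
by case: (u i).
Qed.

Lemma v_ne w (i : 'I_n) : w \in N -> v i * w != w.
Proof.
case/phi_surj=> u <-; rewrite -phi_flip; apply/eqP => /phi_inj/ffunP/(_ i).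
by rewrite /cube_flip ffunE eqxx; case: (u i).
Qed.

Lemma v_eq_mod (i : 'I_n) k : v i = v k -> i = Ordinal (ltn_pmod k n_gt0).
Proof.
move=> E; apply: (@v_inj _ _ 1); rewrite ?group1 // !mulg1 E /=; exact: vmod.
Qed.
Lemma zX : z \in X. Proof. by apply: (subsetP NX); apply: zN. Qed.
Lemma KX : K \subset X. Proof. by rewrite cycle_subG aX. Qed.

Lemma stab_cyc (c g : gT) : c \in X -> g \in X ->
  induces_cyclic_on_edges X z (<[c]> :* g).
Proof.
move=> cX gX; rewrite /induces_cyclic_on_edges.
exists (c ^ g).
  rewrite inE groupJ //= -rcosetM conjgE !mulgA mulgV mul1g rcosetM.
  by rewrite rcoset_id ?cycle_id.
move=> x; rewrite inE => /andP[xX /eqP].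
rewrite -rcosetM => /rcoset_eqP; rewrite mem_rcoset => /cycleP[k Ek].
exists k => E _; congr (_ :* _).
by rewrite -conjXg conjgE -Ek !mulgA mulVg mul1g mulgVK.
Qed.

Lemma rotary : rm_X_rotary X a z.
Proof.
split.
- move=> p q; rewrite !inE => /and3P[p1 p2 /set0Pn[w wp]] /and3P[q1 q2 /set0Pn[w' wq]].
  move: wp wq; rewrite !inE => /andP[wp1 wp2] /andP[wq1 wq2].
  case/rcosetsP: p1 => g1 g1X Ep1; case/rcosetsP: p2 => h1 h1X Ep2.
  case/rcosetsP: q1 => g2 g2X Eq1; case/rcosetsP: q2 => h2 h2X Eq2.
  have wX : w \in X.
    by move: wp1; rewrite Ep1 mem_rcoset => /(subsetP KX) H;
       rewrite -(mulgKV g1 w) groupM.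
  have w'X : w' \in X.
    by move: wq1; rewrite Eq1 mem_rcoset => /(subsetP KX) H;
       rewrite -(mulgKV g2 w') groupM.
  exists (w^-1 * w'); first by rewrite groupM ?groupV.
  have e1 : p.1 = <[a]> :* w by rewrite Ep1; apply/esym/rcoset_eqP; rewrite -Ep1.
  have e2 : p.2 = <[z]> :* w by rewrite Ep2; apply/esym/rcoset_eqP; rewrite -Ep2.
  have e3 : q.1 = <[a]> :* w' by rewrite Eq1; apply/esym/rcoset_eqP; rewrite -Eq1.
  have e4 : q.2 = <[z]> :* w' by rewrite Eq2; apply/esym/rcoset_eqP; rewrite -Eq2.
  by rewrite [LHS]surjective_pairing e3 e4 e1 e2 -!rcosetM mulKVg.
- by move=> V /rcosetsP[g gX ->]; apply: stab_cyc => //; apply: aX.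
- by move=> F /rcosetsP[g gX ->]; apply: stab_cyc => //; rewrite groupM ?aX ?zX.
Qed.
Lemma vert_rep V : V \in rm_vertices X a -> exists2 w, w \in N & V = K :* w.
Proof.
case/rcosetsP=> g /decomp[k [w [_ wN ->]]] ->; exists w => //; exact: KcosetK.
Qed.

Lemma edge_rep E : E \in rm_edges X z ->
  exists k w, [/\ (k < n * lam)%N, w \in N & E = <[z]> :* (a ^+ k * w)].
Proof. by case/rcosetsP=> g /decomp[k [w [kl wN ->]]] ->; exists k, w. Qed.

Lemma expa_inj k k' : (k < n * lam)%N -> (k' < n * lam)%N -> a ^+ k = a ^+ k' -> k = k'.
Proof.
by move=> kl kpl /eqP; rewrite eq_expg_mod_order ho !modn_small // => /eqP.
Qed.

Lemma edge_eq k k' w w' : w \in N -> w' \in N ->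
  <[z]> :* (a ^+ k * w) = <[z]> :* (a ^+ k' * w') ->
  a ^+ k = a ^+ k' /\ (w = w' \/ w = v k' * w').
Proof.
move=> wN w'N E.
have : a ^+ k * w \in <[z]> :* (a ^+ k' * w') by rewrite -E rcoset_refl.
rewrite zcoset mulgA zak -mulgA => /orP[/eqP/(DU wN w'N)[-> ->]|/eqP/(DU wN (groupM (vN k') w'N))[-> ->]].
- by split => //; left.
- by split => //; right.
Qed.

Lemma vert_in w : w \in N -> K :* w \in rm_vertices X a.
Proof. by move=> wN; apply/rcosetsP; exists w => //; apply: (subsetP NX). Qed.

Lemma edge_in k w : w \in N -> <[z]> :* (a ^+ k * w) \in rm_edges X z.
Proof.
move=> wN; apply/rcosetsP; exists (a ^+ k * w) => //.
by rewrite groupM ?groupX ?aX //; apply: (subsetP NX).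
Qed.

Lemma idx_lt (i : 'I_n) (j : 'I_lam) : (i + n * j < n * lam)%N.
Proof.
have : (i + n * j < n + n * j)%N by rewrite ltn_add2r.
move/leq_trans; apply; rewrite -mulnS leq_mul2l ltn_ord orbT //.
Qed.

Lemma idx_mod (i : 'I_n) j : ((i + n * j) %% n = i)%N.
Proof. by rewrite addnC mulnC modnMDl modn_small. Qed.

Lemma idx_div (i : 'I_n) j : ((i + n * j) %/ n = j)%N.
Proof. by rewrite addnC mulnC divnMDl ?n_gt0 // divn_small // addn0. Qed.

Lemma v_idx (i : 'I_n) j : v (i + n * j) = v i.
Proof. by rewrite vmod idx_mod. Qed.

Definition Fc (u : {ffun 'I_n -> bool}) := K :* phi u.
Definition Gc (e : {ffun 'I_n -> bool} * 'I_n * 'I_lam) :=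
  <[z]> :* (a ^+ (e.1.2 + n * e.2) * phi e.1.1).

Lemma cube_iso : mg_iso (rm_vertices X a) (rm_edges X z) (@rm_inc gT)
  [set: {ffun 'I_n -> bool}] (cubeQ_edges n lam) (@cubeQ_inc n lam).
Proof.
have e0 : {ffun 'I_n -> bool} * 'I_n * 'I_lam.
  by split; [split; [exact: [ffun => false] | exact: Ordinal n_gt0] | exact: Ordinal hl].
apply: (@mg_iso_inv _ _ _ _ _ _ _ _ _ _ Fc Gc [ffun => false] e0).
- by move=> u u' _ _ /Krep E; apply: phi_inj; apply: E; apply: phi_in.
- apply/eqP; rewrite eqEsubset; apply/andP; split; apply/subsetP => V.
    by case/imsetP=> u _ ->; apply: vert_in; apply: phi_in.
  case/vert_rep=> w /phi_surj[u <-] ->; exact: imset_f.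
- move=> [[u i] j] [[u' i'] j']; rewrite !inE /Gc /= => ui u'i' /edge_eq[]; rewrite ?phi_in //.
  move/(expa_inj (idx_lt _ _) (idx_lt _ _)) => Ek.
  have Ei : i = i' by apply: val_inj; rewrite /= -(idx_mod i j) Ek idx_mod.
  have Ej : j = j' by apply: val_inj; rewrite /= -(idx_div i j) Ek idx_div.
  subst i' j'; case=> [/phi_inj -> //|].
  rewrite v_idx -phi_flip => /phi_inj Eu; move: ui; rewrite Eu /cube_flip ffunE eqxx.
  by rewrite u'i'.
- apply/eqP; rewrite eqEsubset; apply/andP; split; apply/subsetP => E.
    by case/imsetP=> e _ ->; apply: edge_in; apply: phi_in.
  case/edge_rep=> k [w [kl wN ->]].
  have il : (k %% n < n)%N by rewrite ltn_pmod // n_gt0.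
  have jl : (k %/ n < lam)%N by rewrite ltn_divLR ?n_gt0 // mulnC.
  have Ek : (Ordinal il + n * Ordinal jl)%N = k by rewrite /= addnC mulnC -divn_eq.
  case/phi_surj: wN => u0 Eu0.
  case Hu : (u0 (Ordinal il)).
    apply/imsetP; exists (cube_flip u0 (Ordinal il), Ordinal il, Ordinal jl).
      by rewrite inE /= /cube_flip ffunE eqxx Hu.
    rewrite /Gc /= Ek phi_flip Eu0 /= -vmod mulgA -zak -mulgA zcosetz //.
  apply/imsetP; exists (u0, Ordinal il, Ordinal jl); first by rewrite inE /= Hu.
  by rewrite /Gc /= Ek Eu0.
- move=> u0 [[u i] j] _ _; rewrite /Fc /Gc /cubeQ_inc /= INC ?phi_in //.
  by rewrite v_idx -phi_flip !(inj_eq phi_inj).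
Qed.
Lemma vwN k w : w \in N -> v k * w \in N.
Proof. by move=> wN; rewrite groupM // vN. Qed.

Lemma vk_vk k w : v k * (v k * w) = w.
Proof. by rewrite mulgA vsq mul1g. Qed.

Lemma nbr_eq w0 : w0 \in N ->
  rm_neighbours X a z (K :* w0) = [set K :* (v i * w0) | i : 'I_n].
Proof.
move=> w0N; apply/eqP; rewrite eqEsubset; apply/andP; split; apply/subsetP => W.
- rewrite inE => /and3P[Wv WV /existsP[E /and3P[Ee i0 i1]]].
  case/vert_rep: Wv WV i1 => w1 w1N ->{W} WV i1.
  case/edge_rep: Ee i0 i1 => k [w [_ wN ->]]; rewrite !INC // => i0 i1.
  have E1 : w1 = v k * w0.
    case/orP: i0 => /eqP E0; case/orP: i1 => /eqP E1; subst.
    - by rewrite eqxx in WV.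
    - by [].
    - by rewrite vk_vk.
    - by rewrite eqxx in WV.
  apply/imsetP; exists (Ordinal (ltn_pmod k n_gt0)) => //.
  by rewrite E1 /= -vmod.
- case/imsetP=> i _ ->; rewrite inE vert_in ?vwN //=.
  apply/andP; split.
    apply/eqP => /(Krep (vwN i w0N) w0N) /eqP.
    by rewrite (negbTE (v_ne i w0N)).
  apply/existsP; exists (<[z]> :* (a ^+ i * w0)).
  by rewrite edge_in // !INC ?vwN // !eqxx orbT.
Qed.

Lemma valency : {in rm_vertices X a, forall V, #|rm_neighbours X a z V| = n}.
Proof.
move=> V /vert_rep[w0 w0N ->]; rewrite nbr_eq // card_imset ?card_ord //.
move=> i j /(Krep (vwN i w0N) (vwN j w0N)).
exact: v_inj.
Qed.

Lemma mult_eq w0 (i : 'I_n) : w0 \in N ->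
  [set E in rm_edges X z | rm_inc (K :* w0) E && rm_inc (K :* (v i * w0)) E]
  = [set <[z]> :* (a ^+ (i + n * j) * w0) | j : 'I_lam].
Proof.
move=> w0N; apply/eqP; rewrite eqEsubset; apply/andP; split; apply/subsetP => E.
- rewrite inE => /andP[Ee /andP[]]; case/edge_rep: Ee => k [w [kl wN ->]].
  rewrite !INC ?vwN // => i0 i1.
  have [Evk Ew] : v i = v k /\ <[z]> :* (a ^+ k * w) = <[z]> :* (a ^+ k * w0).
    case/orP: i0 => /eqP E0; case/orP: i1 => /eqP E1; subst w0.
    - by move: E1 (v_ne i wN) => ->; rewrite eqxx.
    - by split => //; apply: (mulIg w).
    - split; last by rewrite [in RHS]mulgA -zak -mulgA zcosetz.
      by apply: (mulIg (v k * w)); rewrite E1 vk_vk.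
    - by move: E1 (v_ne i (vwN k wN)) => ->; rewrite eqxx.
  rewrite Ew; apply/imsetP.
  have jl : (k %/ n < lam)%N by rewrite ltn_divLR ?n_gt0 // mulnC.
  exists (Ordinal jl) => //.
  have -> : i = Ordinal (ltn_pmod k n_gt0) by apply: v_eq_mod.
  by rewrite /= addnC mulnC -divn_eq.
- case/imsetP=> j _ ->; rewrite inE edge_in //= !INC ?vwN //.
  by rewrite eqxx /= v_idx eqxx orbT.
Qed.

Lemma multiplicity : {in rm_vertices X a, forall V, {in rm_neighbours X a z V, forall W,
          rm_mult X z V W = lam}}.
Proof.
move=> V /vert_rep[w0 w0N ->] W; rewrite nbr_eq // => /imsetP[i _ ->].
rewrite /rm_mult mult_eq // card_imset ?card_ord //.
move=> j j' /edge_eq[]; rewrite ?(idx_lt i j) // => /(expa_inj (idx_lt i j) (idx_lt i j')).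
by move=> E _; apply: val_inj => /=; rewrite -(idx_div i j) E idx_div.
Qed.
Fixpoint P (m : nat) : gT := if m is m'.+1 then v m' * P m' else 1.

Lemma PN m : P m \in N.
Proof. by elim: m => [|m IH] /=; [exact: group1 | exact: vwN]. Qed.

Lemma azP m : (a * z) ^+ m = a ^+ m * P m.
Proof.
elim: m => [|m IH]; first by rewrite !expg0 mulg1.
rewrite expgS IH /= -(mulgA a z) (mulgA z) zak -!mulgA mulgA -expgS.
done.
Qed.

Definition cP m : {ffun 'I_n -> bool} := [ffun j : 'I_n => addb (odd (m %/ n)) (j < m %% n)%N].

Lemma cP0 : cP 0 = [ffun => false].
Proof. by apply/ffunP => j; rewrite !ffunE div0n mod0n. Qed.

Lemma cPS m : cP m.+1 = cube_flip (cP m) (Ordinal (ltn_pmod m n_gt0)).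
Proof.
apply/ffunP => j; rewrite /cube_flip !ffunE /= modnS divnS ?n_gt0 //.
have jn := ltn_ord j; have rn : (m %% n < n)%N by rewrite ltn_pmod ?n_gt0.
case: ifP => D.
  have Er : (m %% n).+1 = n.
    apply/eqP; rewrite eqn_leq rn /=.
    apply: dvdn_leq => //; rewrite -(dvdn_addr _ (dvdn_mull (m %/ n) (dvdnn n))).
    by rewrite addnS -divn_eq.
  rewrite add1n /= ltn0 addbF; case: eqP => [Ej|Ej].
    by rewrite Ej ltnn addbF.
  have -> : (j < m %% n)%N.
    rewrite -ltnS Er ltn_neqAle jn andbT; apply/eqP => E; apply: Ej; apply: val_inj => /=.
    by apply/eqP; rewrite -eqSS Er E.
  by rewrite addbT.
rewrite add0n ltnS leq_eqVlt; case: (eqVneq (nat_of_ord j) (m %% n)) => [Ej|Ej] /=.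
  have -> : j == Ordinal (ltn_pmod m n_gt0) by apply/eqP/val_inj.
  by rewrite Ej ltnn addbT addbF.
have -> : (j == Ordinal (ltn_pmod m n_gt0)) = false.
  by apply/eqP => E; rewrite E eqxx in Ej.
done.
Qed.

Lemma P_phi m : P m = phi (cP m).
Proof.
elim: m => [|m IH]; first by rewrite cP0 phi0.
by rewrite /= cPS phi_flip -IH /= -vmod.
Qed.

Lemma odd_div i : odd (i %/ n) = ((i %% (2 * n)) %/ n == 1)%N.
Proof. by rewrite -modn_divl modn2; case: (odd _). Qed.

Lemma mod_mod i : ((i %% (2 * n)) %% n = i %% n)%N.
Proof. by rewrite modn_dvdm // dvdn_mull. Qed.

Lemma cP_eq i j : (cP i == cP j) = (i %% (2 * n) == j %% (2 * n))%N.
Proof.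
apply/eqP/eqP => [E|E]; last first.
  by apply/ffunP => t; rewrite !ffunE odd_div E -mod_mod E mod_mod odd_div.
have n1 : (n.-1 < n)%N by rewrite prednK ?n_gt0.
have Eo : odd (i %/ n) = odd (j %/ n).
  move/ffunP: E => /(_ (Ordinal n1)); rewrite !ffunE /=.
  have hh : forall m, (n.-1 < m %% n)%N = false.
    by move=> m; rewrite ltnNge -ltnS prednK ?n_gt0 // ltn_pmod ?n_gt0.
  by rewrite !hh !addbF.
have Er : (i %% n = j %% n)%N.
  have H : forall t : 'I_n, (t < i %% n)%N = (t < j %% n)%N.
    move=> t; move/ffunP: E => /(_ t); rewrite !ffunE Eo.
    by case: (odd _); case: (_ < _)%N; case: (_ < _)%N.
  case: (ltngtP (i %% n) (j %% n)) => // L.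
    by move: (H (Ordinal (ltn_pmod i n_gt0))); rewrite /= ltnn L.
  by move: (H (Ordinal (ltn_pmod j n_gt0))); rewrite /= ltnn L.
rewrite (divn_eq (i %% (2 * n)) n) (divn_eq (j %% (2 * n)) n) !mod_mod Er.
congr (_ * _ + _)%N.
have h1 : ((i %% (2 * n)) %/ n < 2)%N by rewrite ltn_divLR ?n_gt0 // ltn_pmod // muln_gt0 n_gt0.
have h2 : ((j %% (2 * n)) %/ n < 2)%N by rewrite ltn_divLR ?n_gt0 // ltn_pmod // muln_gt0 n_gt0.
move: Eo; rewrite !odd_div.
by case: (_ %/ _)%N h1 => [|[|]] // _; case: (_ %/ _)%N h2 => [|[|]].
Qed.

Lemma P_eq i j : (P i == P j) = (i %% (2 * n) == j %% (2 * n))%N.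
Proof. by rewrite !P_phi (inj_eq phi_inj) cP_eq. Qed.

Lemma az1 m : ((a * z) ^+ m == 1) = (n * lam %| m)%N && (2 * n %| m)%N.
Proof.
rewrite azP; apply/eqP/andP => [E|[D1 D2]].
  have E' : a ^+ m * P m = a ^+ 0 * 1 by rewrite E expg0 mulg1.
  case: (DU (PN m) (group1 N) E') => E1 E2.
  split; first by rewrite -ho order_dvdn E1 expg0.
  have H : P m == P 0 by rewrite E2.
  by move: H; rewrite P_eq mod0n.
move: D1; rewrite -ho order_dvdn => /eqP ->; rewrite mul1g.
have : P m == P 0 by rewrite P_eq mod0n; move: D2.
by move/eqP.
Qed.

Lemma lcm_eq : lcmn (n * lam) (2 * n) = (2 * n * lam %/ gcdn 2 lam)%N.
Proof.
rewrite [(2 * n)%N]mulnC -muln_lcmr /lcmn muln_divA; last by rewrite dvdn_mulr // dvdn_gcdl.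
by rewrite gcdnC -mulnA (mulnC 2 lam).
Qed.

Lemma order_az : #[a * z] = (2 * n * lam %/ gcdn 2 lam)%N.
Proof.
rewrite -lcm_eq; apply/eqP; rewrite eqn_dvd; apply/andP; split.
  by rewrite order_dvdn az1 -!dvdn_lcm dvdnn.
by rewrite dvdn_lcm -az1 -order_dvdn dvdnn.
Qed.
Lemma idxg_lt d t (i : 'I_d) (j : 'I_t) : (i + d * j < d * t)%N.
Proof.
have : (i + d * j < d + d * j)%N by rewrite ltn_add2r.
move/leq_trans; apply; rewrite -mulnS leq_mul2l ltn_ord orbT //.
Qed.

Lemma idxg_mod d (i : 'I_d) j : ((i + d * j) %% d = i)%N.
Proof. by rewrite addnC mulnC modnMDl modn_small. Qed.

Lemma idxg_div d (i : 'I_d) j : ((i + d * j) %/ d = j)%N.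
Proof.
have d0 : (0 < d)%N by case: d i => [[]|].
by rewrite addnC mulnC divnMDl // divn_small // addn0.
Qed.

Lemma mu_gt0 : (0 < lam %/ gcdn 2 lam)%N.
Proof. by rewrite divn_gt0 ?gcdn_gt0 ?orbT // dvdn_leq // dvdn_gcdr. Qed.

Lemma M_eq : #[a * z] = (2 * n * (lam %/ gcdn 2 lam))%N.
Proof. by rewrite order_az muln_divA // dvdn_gcdr. Qed.

Lemma n2_gt0 : (0 < 2 * n)%N. Proof. by rewrite muln_gt0 n_gt0. Qed.

Section Face.
Variables (k : nat) (w : gT).
Hypothesis wN : w \in N.
Local Notation g := (a ^+ k * w).

Definition W i := P i ^ (a ^+ k) * w.

Lemma WN i : W i \in N.
Proof. by rewrite groupM // memJ_norm ?PN ?akN. Qed.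

Lemma azg i : (a * z) ^+ i * g = a ^+ (i + k) * W i.
Proof.
rewrite azP expgD -!mulgA; congr (_ * _).
by rewrite /W (mulgA (P i)) (conjgC (P i)) -mulgA.
Qed.

Lemma vW i : v (i + k) * W i = W i.+1.
Proof. by rewrite /W /v expgD conjgM mulgA -conjMg. Qed.

Lemma W_eq i j : (W i == W j) = (i %% (2 * n) == j %% (2 * n))%N.
Proof. by rewrite /W (inj_eq (mulIg w)) (inj_eq (conjg_inj _)) P_eq. Qed.

Definition sF i := K :* ((a * z) ^+ i * g).
Definition eF i := <[z]> :* ((a * z) ^+ i * g).

Lemma sF_W i : sF i = K :* W i.
Proof. by rewrite /sF azg KcosetK. Qed.

Lemma eF_W i : eF i = <[z]> :* (a ^+ (i + k) * W i).
Proof. by rewrite /eF azg. Qed.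

Lemma inc_se i m : rm_inc (sF i) (eF m) =
  (i %% (2 * n) == m %% (2 * n))%N || (i %% (2 * n) == m.+1 %% (2 * n))%N.
Proof. by rewrite sF_W eF_W INC ?WN // vW !W_eq. Qed.

Lemma sF_eq i j : sF i = sF j -> (i %% (2 * n) = j %% (2 * n))%N.
Proof. by rewrite !sF_W => /(Krep (WN i) (WN j)) /eqP; rewrite W_eq => /eqP. Qed.

Lemma sF_mod i : sF i = sF (i %% (2 * n)).
Proof. by rewrite !sF_W; congr (_ :* _); apply/eqP; rewrite W_eq modn_mod. Qed.

Lemma eF_inj m m' : (m < #[a * z])%N -> (m' < #[a * z])%N -> eF m = eF m' -> m = m'.
Proof.
move=> ml m'l; rewrite !eF_W => /edge_eq[]; rewrite ?WN // !expgD => /mulIg Ea.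
case=> [/eqP|]; last first.
  rewrite vW => /eqP; rewrite W_eq => /eqP E2.
  move/eqP: Ea; rewrite eq_expg_mod_order ho => /eqP E1.
  have E3 : (m %% n = m' %% n)%N.
    by rewrite -(modn_dvdm m (dvdn_mulr lam (dvdnn n))) E1 modn_dvdm // dvdn_mulr.
  have E4 : (m %% n = m'.+1 %% n)%N by rewrite -mod_mod E2 mod_mod.
  move: E4; rewrite E3 modnS; case: ifP => [D E5|_ /eqP]; last by rewrite -[X in X == _]addn0 -addn1 eqn_add2l.
  have : (n %| m')%N by rewrite /dvdn E5.
  move=> D'; move: D; rewrite -addn1 dvdn_addr // dvdn1 => /eqP n1.
  by move: hn; rewrite n1.
rewrite W_eq -P_eq => /eqP EP.
have : (a * z) ^+ m == (a * z) ^+ m' by rewrite !azP Ea EP.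
by rewrite eq_expg_mod_order !modn_small // => /eqP.
Qed.

Lemma face_regular : regular_seq (face_vertex_seq a z g).
Proof.
rewrite /face_vertex_seq M_eq.
apply: (regular_periodic (f := sF)); rewrite ?n2_gt0 ?mu_gt0 //.
  by move=> i; rewrite sF_mod [in RHS]sF_mod modnDr.
rewrite map_inj_in_uniq ?iota_uniq // => i j; rewrite !mem_iota !add0n => il jl /sF_eq.
by rewrite !modn_small.
Qed.

Lemma face_edge_mem E : (E \in face_edge_seq a z g) = [exists m : 'I_#[a * z], E == eF m].
Proof.
apply/mapP/existsP => [[m]|[m /eqP ->]].
  by rewrite mem_iota add0n => ml ->; exists (Ordinal ml).
by exists (nat_of_ord m); rewrite // mem_iota add0n ltn_ord.
Qed.

Lemma face_iso : mg_iso [set V in rm_vertices X a |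
                   [exists E in rm_edges X z, (E \in face_edge_seq a z g) && rm_inc V E]]
                [set E in rm_edges X z | E \in face_edge_seq a z g] (@rm_inc gT)
                [set: 'I_(2 * n)] [set: 'I_(2 * n) * 'I_(lam %/ gcdn 2 lam)]
                (@cycleC_inc (2 * n) (lam %/ gcdn 2 lam)).
Proof.
set mu := (lam %/ gcdn 2 lam)%N.
have i0 : 'I_(2 * n) := Ordinal n2_gt0.
have j0 : 'I_mu := Ordinal mu_gt0.
have ltM : forall (r : 'I_(2 * n)) (q : 'I_mu), (r + 2 * n * q < #[a * z])%N.
  by move=> r q; rewrite M_eq idxg_lt.
have lt2M : forall (r : 'I_(2 * n)), (r < #[a * z])%N.
  move=> r; apply: leq_trans (ltM r j0); exact: leq_addr.
apply: (@mg_iso_inv _ _ _ _ _ _ _ _ _ _ (fun i : 'I_(2 * n) => sF i)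
  (fun p : 'I_(2 * n) * 'I_mu => eF (p.1 + 2 * n * p.2)) i0 (i0, j0)).
- move=> i j _ _ /sF_eq; rewrite !modn_small // => E; exact: val_inj.
- apply/eqP; rewrite eqEsubset; apply/andP; split; apply/subsetP => V.
    case/imsetP=> i _ ->; rewrite inE sF_W vert_in ?WN //=.
    apply/existsP; exists (eF i); rewrite eF_W edge_in ?WN //= -eF_W face_edge_mem.
    apply/andP; split; first by apply/existsP; exists (Ordinal (lt2M i)).
    by rewrite -sF_W inc_se eqxx.
  rewrite inE => /andP[Vv /existsP[E /and3P[_]]]; rewrite face_edge_mem => /existsP[m /eqP ->].
  case/vert_rep: Vv => w0 w0N ->; rewrite eF_W INC ?WN // vW => Hor.
  have [j Ej] : exists j, K :* w0 = sF j.
    by case/orP: Hor => /eqP ->; [exists m | exists m.+1]; rewrite sF_W.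
  apply/imsetP; exists (Ordinal (ltn_pmod j n2_gt0)) => //.
  by rewrite Ej /= -sF_mod.
- move=> [r q] [r' q'] _ _ /= /eF_inj E.
  have E' := E (ltM r q) (ltM r' q').
  have Er : r = r' by apply: val_inj; rewrite /= -(idxg_mod r q) E' idxg_mod.
  have Eq : q = q' by apply: val_inj; rewrite /= -(idxg_div r q) E' idxg_div.
  by rewrite Er Eq.
- apply/eqP; rewrite eqEsubset; apply/andP; split; apply/subsetP => E.
    case/imsetP=> [[r q]] _ -> /=; rewrite inE eF_W edge_in ?WN //= -eF_W face_edge_mem.
    by apply/existsP; exists (Ordinal (ltM r q)).
  rewrite inE => /andP[_]; rewrite face_edge_mem => /existsP[m /eqP ->].
  have ml : (nat_of_ord m < 2 * n * mu)%N by rewrite /mu -M_eq.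
  have rl : (m %% (2 * n) < 2 * n)%N by rewrite ltn_pmod ?n2_gt0.
  have ql : (m %/ (2 * n) < mu)%N by rewrite ltn_divLR ?n2_gt0 // mulnC.
  apply/imsetP; exists (Ordinal rl, Ordinal ql); first by rewrite inE.
  by rewrite /= addnC mulnC -divn_eq.
- move=> i [r q] _ _ /=; rewrite inc_se /cycleC_inc /= modn_small // idxg_mod.
  have -> : ((r + 2 * n * q).+1 %% (2 * n) = r.+1 %% (2 * n))%N.
    by rewrite -addSn addnC mulnC modnMDl.
  by [].
Qed.

End Face.

Lemma face_props : {in X, forall g, regular_seq (face_vertex_seq a z g) /\
         mg_iso [set V in rm_vertices X a |
                   [exists E in rm_edges X z, (E \in face_edge_seq a z g) && rm_inc V E]]
                [set E in rm_edges X z | E \in face_edge_seq a z g] (@rm_inc gT)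
                [set: 'I_(2 * n)] [set: 'I_(2 * n) * 'I_(lam %/ gcdn 2 lam)]
                (@cycleC_inc (2 * n) (lam %/ gcdn 2 lam))}.
Proof.
move=> g /decomp[k [w [_ wN ->]]]; split; [exact: face_regular | exact: face_iso].
Qed.
End Main.

Theorem lemma6p4 (gT : finGroupType) (n lam : nat) (X N : {group gT}) (a z : gT) :
  (3 <= n)%N -> (1 <= lam)%N ->
  N ><| <[a]> = X ->
  2.-abelem N ->
  N :=: <<[set z ^ (a ^+ i) | i : 'I_n]>> ->
  #|N| = (2 ^ n)%N ->
  #[a] = (n * lam)%N ->
  z ^ (a ^+ n) = z ->
  let mu := (lam %/ gcdn 2 lam)%N in
  rm_X_rotary X a z /\
  [/\
      mg_iso (rm_vertices X a) (rm_edges X z) (@rm_inc gT)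
             [set: {ffun 'I_n -> bool}] (cubeQ_edges n lam) (@cubeQ_inc n lam),
      {in rm_vertices X a, forall V, #|rm_neighbours X a z V| = n},
      {in rm_vertices X a, forall V, {in rm_neighbours X a z V, forall W,
          rm_mult X z V W = lam}},
      #[a * z] = (2 * n * lam %/ gcdn 2 lam)%N &
      {in X, forall g,
         regular_seq (face_vertex_seq a z g) /\
         mg_iso [set V in rm_vertices X a |
                   [exists E in rm_edges X z, (E \in face_edge_seq a z g) && rm_inc V E]]
                [set E in rm_edges X z | E \in face_edge_seq a z g] (@rm_inc gT)
                [set: 'I_(2 * n)] [set: 'I_(2 * n) * 'I_mu] (@cycleC_inc (2 * n) mu)}].
Proof.
move=> hn hl hsd hab hgen hcard ho hzn mu.
split; first exact: (rotary hn hsd hgen).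
split.
- exact: (cube_iso hn hl hsd hab hgen hcard ho hzn).
- exact: (valency hn hsd hab hgen hcard ho hzn).
- exact: (multiplicity hn hsd hab hgen hcard ho hzn).
- exact: (order_az hn hsd hab hgen hcard ho hzn).
- exact: (face_props hn hl hsd hab hgen hcard ho hzn).
Qed.
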